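(* Let $L>0$, let $n$ be an even positive integer, $\Delta x=2L/n$, and $x_j=-L+j\Delta x$ for $0\le j\le n-1$. Let $k\ge1$ and let $\omega_1,\dots,\omega_k$ be measures $\omega_i=\sum_{j=0}^{n-1}a^i_j\,\delta_{x_j}$ with $a^i_j\ge0$. Fix $C\in[0,1]$ and define for $\varepsilon>0$ $$\delta(\varepsilon)=C+\int_\varepsilon^\infty(1-e^{\varepsilon-s})\,(\omega_1*\cdots*\omega_k)(s)\,ds,$$ and let $\widetilde\delta(\varepsilon)$ be the output of the following algorithm: with $\boldsymbol a^i=(a^i_0,\dots,a^i_{n-1})^{\mathrm T}$, compute $\boldsymbol b=D\,\mathcal F^{-1}\big(\mathcal F(D\boldsymbol a^1)\odot\cdots\odot\mathcal F(D\boldsymbol a^k)\big)$ and set $$\widetilde\delta(\varepsilon)=C+\sum_{\ell\in\{0,\dots,n-1\}:\,x_\ell>\varepsilon}\big(1-e^{\varepsilon-x_\ell}\big)\,b_\ell .$$ Let $\alpha^+(\lambda)=\sum_{i=1}^k\log\sum_{j}a^i_je^{\lambda x_j}$ and $\alpha^-(\lambda)=\sum_{i=1}^k\log\sum_j a^i_je^{-\lambda x_j}$. Then for all $\varepsilon>0$ and all $\lambda>0$, $$\big|\delta(\varepsilon)-\widetilde\delta(\varepsilon)\big|\le\big(e^{\alpha^+(\lambda)}+e^{\alpha^-(\lambda)}\big)\frac{e^{-L\lambda}}{1-e^{-2L\lambda}}.$$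
   Context: $\delta_t$ denotes the Dirac point mass at $t$; convolution of discrete measures is $\big(\sum_i a_i\delta_{t_i}\big)*\big(\sum_j b_j\delta_{u_j}\big)=\sum_{i,j}a_ib_j\delta_{t_i+u_j}$, and $\int_\varepsilon^\infty h(s)\mu(s)ds$ for a discrete measure means the sum of $h$ times the masses of the atoms in $[\varepsilon,\infty)$. $D=\begin{bmatrix}0&I_{n/2}\\ I_{n/2}&0\end{bmatrix}$; $(\mathcal F x)_k=\sum_{j=0}^{n-1}x_je^{-\mathrm i2\pi kj/n}$, $(\mathcal F^{-1}w)_k=\frac1n\sum_{j=0}^{n-1}w_je^{\mathrm i2\pi kj/n}$; $\odot$ is the entrywise product. In the paper, $\omega_i$ are privacy loss distributions of the composed mechanisms, $C=1-\prod_\ell(1-\delta_\ell(\infty))$ accounts for infinite privacy loss, and $\delta(\varepsilon)$ is the tight DP bound. *)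

(* Defs.v *)
From HB Require Import structures.
From mathcomp Require Import all_boot all_order all_algebra.
From mathcomp Require Import all_classical all_reals.
From mathcomp Require Import topology normedtype sequences exp trigo.
From mathcomp Require Import complex.

Set Implicit Arguments.
Unset Strict Implicit.
Unset Printing Implicit Defensive.

Import Order.TTheory GRing.Theory Num.Theory.
Local Open Scope ring_scope.

Section Defs.
Variable R : realType.

(** Discrete measures: finite lists of atoms (position t, mass a),
    representing sum_i a_i delta_{t_i}. *)
Definition dmeasure := seq (R * R).

Definition dirac0 : dmeasure := [:: (0, 1)].

Definition dconv (m1 m2 : dmeasure) : dmeasure :=
  [seq (p.1 + q.1, p.2 * q.2) | p <- m1, q <- m2].

Definition dconv_big (k : nat) (om : 'I_k -> dmeasure) : dmeasure :=
  foldr dconv dirac0 [seq om i | i <- enum 'I_k].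

Definition dint_from (eps : R) (h : R -> R) (m : dmeasure) : R :=
  \sum_(p <- m | eps <= p.1) h p.1 * p.2.

Definition grid (L : R) (n : nat) (j : nat) : R := - L + j%:R * (2 * L / n%:R).

Definition grid_measure (L : R) (n : nat) (a : 'I_n -> R) : dmeasure :=
  [seq (grid L n (nat_of_ord j), a j) | j : 'I_n <- enum 'I_n].

Definition delta_exact (L : R) (n k : nat) (a : 'I_k -> 'I_n -> R) (C eps : R) : R :=
  C + dint_from eps (fun s => 1 - expR (eps - s))
        (dconv_big (fun i => grid_measure L (a i))).

Definition cexpi (theta : R) : R[i] := Complex (cos theta) (sin theta).

Definition dft_mx (n : nat) : 'M[R[i]]_n :=
  \matrix_(p < n, j < n) cexpi (- (2 * pi * (p : nat)%:R * (j : nat)%:R / n%:R)).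

Definition idft_mx (n : nat) : 'M[R[i]]_n :=
  \matrix_(p < n, j < n)
     ((n%:R)^-1 * cexpi (2 * pi * (p : nat)%:R * (j : nat)%:R / n%:R)).

(** D = [[0, I_{n/2}], [I_{n/2}, 0]] : D_{i j} = 1 iff j = i + n/2 mod n. *)
Definition swap_mx (n : nat) : 'M[R[i]]_n :=
  \matrix_(p < n, j < n) ((j : nat) == ((p : nat) + n./2) %% n)%N%:R.

Definition ccol (n : nat) (a : 'I_n -> R) : 'cV[R[i]]_n :=
  \col_(j < n) Complex (a j) 0.

Definition fft_b (n k : nat) (a : 'I_k -> 'I_n -> R) : 'cV[R[i]]_n :=
  swap_mx n *m (idft_mx n *m
    \col_(l < n) \prod_(i < k) ((dft_mx n *m (swap_mx n *m ccol (a i))) l 0)).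

(** Output of the algorithm:
    C + sum_{l : x_l > eps} (1 - e^{eps - x_l}) b_l
    (b_l is real in exact arithmetic; we take its real part). *)
Definition delta_fft (L : R) (n k : nat) (a : 'I_k -> 'I_n -> R) (C eps : R) : R :=
  C + \sum_(l < n | eps < grid L n l)
        (1 - expR (eps - grid L n l)) * complex.Re (fft_b a l 0).

Definition alpha_plus (L : R) (n k : nat) (a : 'I_k -> 'I_n -> R) (lam : R) : R :=
  \sum_(i < k) ln (\sum_(j < n) a i j * expR (lam * grid L n j)).
Definition alpha_minus (L : R) (n k : nat) (a : 'I_k -> 'I_n -> R) (lam : R) : R :=
  \sum_(i < k) ln (\sum_(j < n) a i j * expR (- lam * grid L n j)).

End Defs.

(* Main.v *)
Require Import Defs.
From HB Require Import structures.
From mathcomp Require Import all_boot all_order all_algebra.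
From mathcomp Require Import all_classical all_reals.
From mathcomp Require Import topology normedtype sequences exp trigo.
From mathcomp Require Import complex.
From mathcomp Require Import ring lra zify.
Import Order.TTheory GRing.Theory Num.Theory.
Local Open Scope ring_scope.

Section Cx.
Variable R : realType.

Lemma cexpiD (x y : R) : cexpi (x + y) = cexpi x * cexpi y.
Proof.
rewrite /cexpi cosD sinD.
have -> : (Complex (cos x) (sin x) * Complex (cos y) (sin y) : R[i])
   = Complex (cos x * cos y - sin x * sin y) (cos x * sin y + sin x * cos y) by [].
by congr Complex; rewrite addrC.
Qed.

Lemma cexpi0 : cexpi (0 : R) = 1.
Proof. by rewrite /cexpi cos0 sin0. Qed.

Lemma cexpiNK (x : R) : cexpi (- x) * cexpi x = 1.
Proof. by rewrite -cexpiD addNr cexpi0. Qed.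

Lemma cexpi_neq0 (x : R) : cexpi x != 0.
Proof.
apply/eqP => h; have := cexpiNK x; rewrite h mulr0 => /eqP; by rewrite eq_sym oner_eq0.
Qed.

Variable N : nat.
Hypothesis N0 : (0 < N)%N.

Definition uu (m : nat) : R[i] := cexpi (2 * pi * m%:R / N%:R).

Lemma uuD m1 m2 : uu (m1 + m2) = uu m1 * uu m2.
Proof. by rewrite /uu -cexpiD natrD !mulrDr mulrDl. Qed.

Lemma uu0 : uu 0 = 1.
Proof. by rewrite /uu mulr0 mul0r cexpi0. Qed.

Lemma uuN : uu N = 1.
Proof.
rewrite /uu -mulrA divff ?mulr1; last by rewrite pnatr_eq0 -lt0n.
have -> : (2 * pi : R) = pi *+ 2 by rewrite mulr_natl.
by rewrite /cexpi cos2pi sin2pi.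
Qed.

Lemma uuNm m : uu (N * m) = 1.
Proof. elim: m => [|m IH]; first by rewrite muln0 uu0. by rewrite mulnS uuD IH uuN mulr1. Qed.

Lemma uu_mod m : uu m = uu (m %% N)%N.
Proof. by rewrite {1}(divn_eq m N) uuD mulnC uuNm mul1r. Qed.

Lemma uuM m p : uu (m * p) = uu m ^+ p.
Proof. elim: p => [|p IH]; first by rewrite muln0 uu0. by rewrite mulnS uuD IH exprS. Qed.


Lemma uu_neq1 M : ~~ (N %| M)%N -> uu M != 1.
Proof.
move=> nd; rewrite uu_mod.
have r0 : (0 < (M %% N)%N)%N by rewrite lt0n; move: nd; rewrite /dvdn.
have rN : ((M %% N)%N < N)%N by rewrite ltn_pmod.
set r := (M %% N)%N in r0 rN *.
apply/eqP => h.
have : cos (2 * pi * r%:R / N%:R : R) = 1 by move: h; rewrite /uu /cexpi => -[].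
set th := (2 * pi * r%:R / N%:R : R).
have -> : th = th / 2 + th / 2 by rewrite -splitr.
rewrite cosD.
have : 0 < sin (th / 2).
  apply: sin_gt0_pi; apply/andP; split.
    rewrite /th; apply: divr_gt0 => //; apply: divr_gt0; last by rewrite ltr0n.
    by apply: mulr_gt0; [apply: mulr_gt0 => //; exact: pi_gt0 | rewrite ltr0n].
  have -> : th / 2 = pi * (r%:R / N%:R) by rewrite /th; field; rewrite pnatr_eq0 -lt0n.
  by rewrite gtr_pMr ?pi_gt0 // ltr_pdivrMr ?ltr0n // mul1r ltr_nat.
have := cos2Dsin2 (th / 2).
set c := cos (th / 2); set s := sin (th / 2) => e sp.
move=> h2; have : (0:R) < 0 by nra.
by rewrite ltxx.
Qed.

Lemma uu_sum M : \sum_(p < N) uu (p * M) = if (N %| M)%N then N%:R else 0.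
Proof.
case: ifP => d.
  rewrite (eq_bigr (fun _ => 1)) ?sumr_const ?card_ord //.
  move=> p _; case/dvdnP: d => q ->; by rewrite mulnA mulnC uuNm.
have hw := @uu_neq1 M (negbT d).
have : (uu M - 1) * \sum_(p < N) uu (p * M) = 0.
  under eq_bigr => p _ do rewrite mulnC uuM.
  by rewrite -subrX1 -uuM mulnC uuNm subrr.
by move/eqP; rewrite mulf_eq0 subr_eq0 (negPf hw) /= => /eqP.
Qed.


Lemma uu_neq0 m : uu m != 0.
Proof. exact: cexpi_neq0. Qed.

Lemma cexpiN_uu p T :
  cexpi (- (2 * pi * p%:R * T%:R / N%:R)) = uu (p * (N - 1) * T).
Proof.
apply: (mulIf (uu_neq0 (p * T))).
have -> : cexpi (- (2 * pi * p%:R * T%:R / N%:R) : R) * uu (p * T) = 1.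
  by rewrite /uu natrM !mulrA cexpiNK.
rewrite -uuD.
have -> : (p * (N - 1) * T + p * T = N * (p * T))%N by nia.
by rewrite uuNm.
Qed.

Lemma uu_big (I : Type) (r : seq I) (F : I -> nat) :
  uu (\sum_(i <- r) F i) = \prod_(i <- r) uu (F i).
Proof. exact: (big_morph uu uuD uu0). Qed.

Lemma char_sum (k : nat) (Q : nat) (T : 'I_k -> nat) :
  (N%:R)^-1 * \sum_(p < N) (cexpi (2 * pi * Q%:R * p%:R / N%:R : R) *
     \prod_(i < k) cexpi (- (2 * pi * p%:R * (T i)%:R / N%:R) : R))
  = ((N %| Q + (N - 1) * \sum_(i < k) T i)%N)%:R :> R[i].
Proof.
under eq_bigr => p _.
  under eq_bigr => i _ do rewrite cexpiN_uu.
  rewrite -uu_big.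
  have -> : cexpi (2 * pi * Q%:R * p%:R / N%:R : R) = uu (Q * p) by rewrite /uu natrM mulrA.
  rewrite -uuD.
  have -> : (Q * p + \sum_(i < k) p * (N - 1) * T i = p * (Q + (N - 1) * \sum_(i < k) T i))%N.
    by rewrite mulnDr (mulnC Q) mulnA big_distrr.
  over.
rewrite uu_sum; case: ifP => _; last by rewrite mulr0.
by rewrite mulVf // pnatr_eq0 -lt0n.
Qed.

End Cx.

Section FFT.
Variable R : realType.
Variables (n : nat) (n0 : (0 < n)%N) (ev : ~~ odd n).
Local Notation RC := (real_complex R).
Local Notation h := (n./2)%N.

Lemma nhh : n = (h + h)%N.
Proof. by rewrite addnn -[LHS]odd_double_half (negPf ev). Qed.

Definition shO (j : 'I_n) : 'I_n := Ordinal (ltn_pmod (j + n./2) n0).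

Lemma shOK : involutive shO.
Proof.
move=> j; apply: val_inj => /=.
rewrite modnDml -addnA -nhh modnDr modn_small //.
Qed.

Lemma swapE (v : 'cV[R[i]]_n) l : (swap_mx R n *m v) l 0 = v (shO l) 0.
Proof.
rewrite mxE (bigD1 (shO l)) //= mxE eqxx mul1r big1 ?addr0 // => q hq.
rewrite mxE; suff -> : ((q : nat) == ((l + h) %% n)%N) = false by rewrite mul0r.
by apply/negbTE; move: hq; apply: contra => /eqP e; apply/eqP/val_inj.
Qed.

Lemma fft_bE (k : nat) (a : 'I_k -> 'I_n -> R) (l : 'I_n) :
  fft_b a l 0 = RC (\sum_(t : {ffun 'I_k -> 'I_n}) (\prod_(i < k) a i (t i)) *
     ((n %| shO l + (n - 1) * \sum_(i < k) shO (t i))%N)%:R).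
Proof.
rewrite /fft_b swapE mxE.
under eq_bigr => p _.
  rewrite !mxE.
  under eq_bigr => i _.
    rewrite mxE.
    under eq_bigr => j _ do rewrite swapE mxE.
    rewrite (reindex_inj (inv_inj shOK)) /=.
    under eq_bigr => j _ do rewrite shOK.
    over.
  rewrite bigA_distr_bigA /=.
  rewrite big_distrr /=.
  over.
rewrite exchange_big /= rmorph_sum /=.
apply: eq_bigr => t _.
under eq_bigr => p _.
  rewrite big_split /=.
  have -> : \prod_(i < k) ccol (a i) (t i) 0 = RC (\prod_(i < k) a i (t i)).
    by rewrite rmorph_prod; apply: eq_bigr => i _; rewrite mxE.
  rewrite (_ : n%:R^-1 * _ * (_ * RC (\prod_(i < k) a i (t i))) = RC (\prod_(i < k) a i (t i)) * (n%:R^-1 *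
     (cexpi (2 * pi * ((l + h) %% n)%N%:R * p%:R / n%:R : R) *
      \prod_(i < k) cexpi (- (2 * pi * p%:R * ((t i + h) %% n)%N%:R / n%:R) : R)))); last by ring.
  over.
rewrite -big_distrr /= -big_distrr /=.
rewrite (@char_sum R n n0 k ((l + h) %% n) (fun i => (t i + h) %% n)%N).
by rewrite rmorphM /= rmorph_nat.
Qed.
End FFT.

Section Exact.
Variable R : realType.

Definition fcons (T : finType) k (j : T) (t : {ffun 'I_k -> T}) : {ffun 'I_k.+1 -> T} :=
  [ffun i : 'I_k.+1 => if unlift ord0 i is Some i' then t i' else j].
Arguments fcons {T k}.

Lemma fcons0 (T : finType) k j (t : {ffun 'I_k -> T}) : fcons j t ord0 = j.
Proof. by rewrite ffunE unlift_none. Qed.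

Lemma fconsS (T : finType) k j (t : {ffun 'I_k -> T}) i : fcons j t (lift ord0 i) = t i.
Proof. by rewrite ffunE liftK. Qed.

Lemma sum_ffunS (T : finType) k (F : {ffun 'I_k.+1 -> T} -> R) :
  \sum_t F t = \sum_j \sum_(t : {ffun 'I_k -> T}) F (fcons j t).
Proof.
rewrite pair_big /=.
rewrite (reindex (fun u : T * {ffun 'I_k -> T} => fcons u.1 u.2)) //=.
exists (fun t : {ffun 'I_k.+1 -> T} => (t ord0, [ffun i => t (lift ord0 i)])).
  move=> [j t] _ /=; rewrite fcons0; congr pair; apply/ffunP => i.
  by rewrite ffunE fconsS.
move=> t _ /=; apply/ffunP => i; rewrite ffunE.
by case: (unliftP ord0 i) => [i'|] ->; rewrite ?ffunE.
Qed.

Lemma dconv_bigE (L : R) (n k : nat) (om : 'I_k -> 'I_n -> R) (G : R -> R) :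
  \sum_(p <- dconv_big (fun i => grid_measure L (om i))) G p.1 * p.2 =
  \sum_(t : {ffun 'I_k -> 'I_n}) G (\sum_(i < k) grid L n (t i)) * \prod_(i < k) om i (t i).
Proof.
elim: k om G => [|k IH] om G.
  rewrite /dconv_big enum_ord0 /= big_cons big_nil addr0 mulr1.
  rewrite (eq_bigr (fun _ => G 0)); last by move=> t _; rewrite !big_ord0 mulr1.
  by rewrite sumr_const card_ffun !card_ord expn0.
rewrite /dconv_big enum_ordSl /= -map_comp.
rewrite /dconv big_allpairs_dep /= /grid_measure big_map.
rewrite sum_ffunS big_enum /=.
apply: eq_bigr => j _.
under eq_bigr => i2 _ do rewrite /= mulrCA.
have -> : \sum_(t : {ffun 'I_k -> 'I_n})
      G (\sum_(i < k.+1) grid L n (fcons j t i)) * \prod_(i < k.+1) om i (fcons j t i)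
   = \sum_(t : {ffun 'I_k -> 'I_n}) om ord0 j * (G (grid L n j + \sum_(i < k) grid L n (t i)) *
        \prod_(i < k) om (lift ord0 i) (t i)).
  apply: eq_bigr => t _; rewrite !big_ord_recl !fcons0 mulrCA.
  by congr (_ * (G (_ + _) * _)); apply: eq_bigr => i _; rewrite fconsS.
rewrite -!big_distrr /=; congr (_ * _).
exact: (IH (fun i => om (lift ord0 i)) (fun s => G (grid L n j + s))).
Qed.
End Exact.

Lemma cnd_eq (n A B : nat) : (0 < n)%N ->
  (n %| A %% n + (n - 1) * B)%N = (A == B %[mod n])%N.
Proof.
move=> n0.
have e1 : ((A %% n + (n - 1) * B + B) %% n = A %% n)%N.
  have -> : (A %% n + (n - 1) * B + B = B * n + A %% n)%N by nia.
  by rewrite modnMDl modn_mod.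
rewrite /dvdn; transitivity (A %% n + (n - 1) * B + B == 0 + B %[mod n])%N.
  by rewrite eqn_modDr mod0n.
by rewrite e1 add0n.
Qed.

Lemma cnd_eq2 (n A B B' : nat) : (0 < n)%N -> (B = B' %[mod n])%N ->
  (n %| A %% n + (n - 1) * B)%N = (A == B' %[mod n])%N.
Proof.
move=> n0 e; rewrite cnd_eq //; by rewrite e.
Qed.

Section Main.
Variables (R : realType) (L : R) (n k : nat) (a : 'I_k -> 'I_n -> R) (eps lam : R).
Hypotheses (L0 : 0 < L) (n0 : (0 < n)%N) (ev : ~~ odd n) (k1 : (1 <= k)%N)
  (a0 : forall i j, 0 <= a i j) (lam0 : 0 < lam).
Local Notation h := n./2.
Local Notation grid := (grid L n).

Definition Dx : R := 2 * L / n%:R.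
Definition PP (t : {ffun 'I_k -> 'I_n}) := \sum_(i < k) grid (t i).
Definition SS (t : {ffun 'I_k -> 'I_n}) := (\sum_(i < k) (t i : nat))%N.
Definition mm (t : {ffun 'I_k -> 'I_n}) := \prod_(i < k) a i (t i).
Definition ff (x : R) := if eps <= x then 1 - expR (eps - x) else 0.
Definition gg (x : R) := if eps < x then 1 - expR (eps - x) else 0.
Definition cnd (l : 'I_n) t := (l + h == SS t + k * h %[mod n])%N.
Definition WW' t := \sum_(l < n) if cnd l t then gg (grid l) else 0.

Lemma cndE l (t : {ffun 'I_k -> 'I_n}) :
  (n %| @shO n n0 l + (n - 1) * \sum_(i < k) @shO n n0 (t i))%N = cnd l t.
Proof.
rewrite /= (@cnd_eq2 n _ _ (SS t + k * h)) //.
by rewrite modn_summ big_split /= big_const_ord iter_addn_0 mulnC.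
Qed.

Lemma hpos : (0 < h)%N.
Proof. rewrite lt0n; apply/eqP => e; move: n0; by rewrite {1}(@nhh n ev) e. Qed.

Lemma hL : L = h%:R * Dx.
Proof.
rewrite /Dx {2}(@nhh n ev) natrD; field.
by rewrite -natrD pnatr_eq0 -lt0n addn_gt0 hpos.
Qed.

Lemma Dx_gt0 : 0 < Dx.
Proof. by rewrite /Dx divr_gt0 ?ltr0n // mulr_gt0. Qed.

Lemma PPE t : PP t = ((SS t)%:R - (k * h)%:R) * Dx.
Proof.
rewrite /PP /grid /Defs.grid big_split /= sumr_const card_ord -mulr_suml -natr_sum.
rewrite -/Dx hL natrM; rewrite -mulr_natr; ring.
Qed.

Lemma mm_ge0 t : 0 <= mm t.
Proof. by apply: prodr_ge0 => i _. Qed.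

Lemma gg_bnd x : 0 <= gg x <= 1.
Proof.
rewrite /gg; case: ifP => e; last by rewrite lexx ler01.
rewrite subr_ge0 expR_le1 subr_le0 ltW //= gerDl oppr_le0 expR_ge0 //.
Qed.

Lemma ff_bnd x : 0 <= ff x <= 1.
Proof.
rewrite /ff; case: ifP => e; last by rewrite lexx ler01.
rewrite subr_ge0 expR_le1 subr_le0 e //= gerDl oppr_le0 expR_ge0 //.
Qed.

Lemma ffgg x : ff x = gg x.
Proof.
rewrite /ff /gg le_eqVlt; case: eqP => [->|] //=; by rewrite ltxx subrr expR0 subrr.
Qed.

Lemma cnd_uniq l1 l2 t : cnd l1 t -> cnd l2 t -> l1 = l2.
Proof.
rewrite /cnd => /eqP e1 /eqP e2; apply: val_inj => /=.
have : (l1 + h == l2 + h %[mod n])%N by rewrite e1 e2.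
by rewrite eqn_modDr !modn_small // => /eqP.
Qed.

Lemma WW'_one l0 t : cnd l0 t -> WW' t = gg (grid l0).
Proof.
move=> c; rewrite /WW' (bigD1 l0) //= c big1 ?addr0 // => l nl.
case: ifP => // c'; by rewrite (@cnd_uniq l l0 t c' c) eqxx in nl.
Qed.

Lemma WW'_bnd t : 0 <= WW' t <= 1.
Proof.
case: (pickP (fun l => cnd l t)) => [l0 c|none].
  by rewrite (@WW'_one l0 t c) gg_bnd.
rewrite /WW' big1 ?lexx ?ler01 // => l _; by rewrite none.
Qed.

Lemma in_range t : - L <= PP t < L -> ff (PP t) = WW' t.
Proof.
move=> /andP [r1 r2].
set S := SS t.
have D0 := Dx_gt0.
have e1 : (k * h <= S + h)%N.
  rewrite -(ler_nat R) natrD.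
  have : 0 <= (S%:R + h%:R - (k * h)%:R) * Dx.
    rewrite (_ : _ * Dx = PP t + L); first lra.
    by rewrite PPE hL; ring.
  by rewrite pmulr_lge0 // subr_ge0.
have e2 : (S < k * h + h)%N.
  rewrite -(ltr_nat R) natrD.
  have : 0 < ((k * h)%:R + h%:R - S%:R) * Dx.
    rewrite (_ : _ * Dx = L - PP t); first lra.
    by rewrite PPE hL; ring.
  by rewrite pmulr_lgt0 // subr_gt0.
have l0n : (S + h - k * h < n)%N by have := @nhh n ev; lia.
pose l0 := Ordinal l0n.
have c : cnd l0 t.
  rewrite /cnd /=.
  have -> : (S + k * h = (k - 1) * n + ((S + h - k * h) + h))%N.
    have := @nhh n ev; nia.
  by rewrite modnMDl.
rewrite (@WW'_one l0 t c) ffgg; congr gg.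
rewrite PPE /grid /Defs.grid /= -/Dx natrB // natrD hL; ring.
Qed.


Lemma exactE C : delta_exact L a C eps = C + \sum_t ff (PP t) * mm t.
Proof.
rewrite /delta_exact /dint_from; congr (_ + _).
rewrite big_mkcond /= -(@dconv_bigE R L n k a ff).
by apply: eq_bigr => p _; rewrite /ff; case: ifP; rewrite ?mul0r.
Qed.

Lemma fftE C : delta_fft L a C eps = C + \sum_t WW' t * mm t.
Proof.
rewrite /delta_fft; congr (_ + _).
rewrite big_mkcond /=.
under eq_bigr => l _.
  rewrite (@fft_bE R n n0 ev k a l) /=.
  rewrite (_ : (if _ then _ else _) = gg (grid l) * \sum_t mm t * (cnd l t)%:R); last first.
    rewrite /gg; case: ifP => _; last by rewrite mul0r.
    congr (_ * _); apply: eq_bigr => t _; by rewrite cndE.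
  rewrite big_distrr /=.
  over.
rewrite exchange_big /=; apply: eq_bigr => t _.
rewrite /WW' big_distrl /=; apply: eq_bigr => l _.
by case: ifP => _; rewrite ?mulr1 ?mulr0 ?mul0r //; ring.
Qed.

Lemma out_bnd t : ~~ (- L <= PP t < L) ->
  1 <= expR (lam * (PP t - L)) + expR (- lam * (PP t + L)).
Proof.
have g1 := expR_ge0 (lam * (PP t - L)); have g2 := expR_ge0 (- lam * (PP t + L)).
rewrite negb_and -!ltNge -leNgt => /orP [c|c].
  have : 1 <= expR (- lam * (PP t + L)).
    rewrite leNgt expR_lt1 -leNgt; apply: mulr_le0; first by rewrite oppr_le0 ltW.
    by rewrite -lerBrDr sub0r ltW.
  move: g1 g2; set e1 := expR _; set e2 := expR _; move=> g1 g2 h1; lra.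
have : 1 <= expR (lam * (PP t - L)).
  rewrite leNgt expR_lt1 -leNgt; apply: mulr_ge0; first by rewrite ltW.
  by rewrite subr_ge0.
move: g1 g2; set e1 := expR _; set e2 := expR _; move=> g1 g2 h1; lra.
Qed.

Lemma mgfE c : \sum_t mm t * expR (c * PP t) =
  \prod_(i < k) \sum_(j < n) a i j * expR (c * grid j).
Proof.
rewrite bigA_distr_bigA /=; apply: eq_bigr => t _.
by rewrite /mm /PP mulr_sumr expR_sum big_split.
Qed.

Lemma prod_ln (F : 'I_k -> R) : (forall i, 0 <= F i) ->
  \prod_(i < k) F i <= expR (\sum_(i < k) ln (F i)).
Proof.
move=> F0; rewrite expR_sum; apply: ler_prod => i _.
rewrite F0 /=; have := F0 i; rewrite le_eqVlt => /orP [/eqP <-|p].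
  exact: expR_ge0.
by rewrite lnK.
Qed.

End Main.
Theorem theorem7 (R : realType) (L : R) (n k : nat)
    (a : 'I_k -> 'I_n -> R) (C : R) :
  0 < L -> (0 < n)%N -> ~~ odd n -> (1 <= k)%N ->
  (forall i j, 0 <= a i j) ->
  0 <= C <= 1 ->
  forall eps lam : R, 0 < eps -> 0 < lam ->
  `| delta_exact L a C eps - delta_fft L a C eps |
    <= (expR (alpha_plus L a lam) + expR (alpha_minus L a lam))
       * (expR (- (L * lam)) / (1 - expR (- (2 * L * lam)))).
Proof.
move=> L0 n0 ev k1 a0 _ eps lam _ lam0.
rewrite exactE (@fftE R L n k a eps n0 ev C) opprD addrACA subrr add0r -sumrN -big_split /=.
set E := expR (- (L * lam)).
set PPt := PP R L n k.
set mt := mm R n k a.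
have step1 : `|\sum_t (ff R eps (PPt t) * mt t + - (WW' R L n k eps t * mt t))| <=
    \sum_(t : {ffun 'I_k -> 'I_n}) (expR (lam * (PPt t - L)) + expR (- lam * (PPt t + L))) * mt t.
  apply: le_trans (ler_norm_sum _ _ _) _; apply: ler_sum => t _.
  rewrite -mulrBl normrM (ger0_norm (@mm_ge0 R n k a a0 t)).
  apply: ler_wpM2r; first exact: (@mm_ge0 R n k a a0 t).
  case: (boolP (- L <= PPt t < L)) => r.
    rewrite (@in_range R L n k eps lam L0 n0 ev k1 lam0 t r) subrr normr0.
    by apply: addr_ge0; apply: expR_ge0.
  apply: le_trans (@out_bnd R L n k lam lam0 t r).
  have := @ff_bnd R eps (PPt t); have := @WW'_bnd R L n k eps t.
  move: (ff R eps (PPt t)) (WW' R L n k eps t) => x y.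
  move=> /andP [w1 w2] /andP [f1 f2].
  rewrite ler_norml; apply/andP; split; lra.
apply: le_trans step1 _.
have step2 : \sum_(t : {ffun 'I_k -> 'I_n}) (expR (lam * (PPt t - L)) + expR (- lam * (PPt t + L))) * mt t
   = E * (\sum_t mt t * expR (lam * PPt t) + \sum_t mt t * expR (- lam * PPt t)).
  rewrite mulrDr !big_distrr -big_split /=; apply: eq_bigr => t _.
  rewrite (_ : lam * (PPt t - L) = lam * PPt t + - (L * lam)); last by ring.
  rewrite (_ : - lam * (PPt t + L) = - lam * PPt t + - (L * lam)); last by ring.
  rewrite !expRD /E; ring.
rewrite step2 /PPt /mt !mgfE.
rewrite /alpha_plus /alpha_minus.
have hp : \prod_(i < k) \sum_(j < n) a i j * expR (lam * grid L n j) <=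
   expR (\sum_(i < k) ln (\sum_(j < n) a i j * expR (lam * grid L n j))).
  by apply: prod_ln => i; apply: sumr_ge0 => j _; apply: mulr_ge0 => //; exact: expR_ge0.
have hm : \prod_(i < k) \sum_(j < n) a i j * expR (- lam * grid L n j) <=
   expR (\sum_(i < k) ln (\sum_(j < n) a i j * expR (- lam * grid L n j))).
  by apply: prod_ln => i; apply: sumr_ge0 => j _; apply: mulr_ge0 => //; exact: expR_ge0.
move: hp hm.
set A := \prod_(i < k) _; set B := \prod_(i < k) _.
set eA := expR _; set eB := expR _ => hp hm.
have E0 : 0 < E by exact: expR_gt0.
have q0 : 0 < expR (- (2 * L * lam)) by exact: expR_gt0.
have q1 : expR (- (2 * L * lam)) < 1.
  by rewrite expR_lt1 oppr_lt0; apply: mulr_gt0 => //; apply: mulr_gt0.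
move: q0 q1; set q := expR _ => q0 q1.
have A0 : 0 <= A by apply: prodr_ge0 => i _; apply: sumr_ge0 => j _; apply: mulr_ge0 => //; exact: expR_ge0.
have B0 : 0 <= B by apply: prodr_ge0 => i _; apply: sumr_ge0 => j _; apply: mulr_ge0 => //; exact: expR_ge0.
have hE : E <= E / (1 - q).
  rewrite ler_pdivlMr ?subr_gt0 // ger_pMr //; lra.
rewrite mulrC; apply: ler_pM => //.
- by apply: addr_ge0.
- by apply: ltW.
- by apply: lerD.
Qed.
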